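(* Let $(\mathcal{Z},d_\mathcal{Z})$ be a metric space and $\mathcal{F}$ a class of functions $f:\mathcal{Z}\to\mathbb{R}$. The following are equivalent: (i) for every $f\in\mathcal{F}$ and every $z\in\mathcal{Z}$ there exists a constant $\lambda$ such that $f(z')-f(z)\le\lambda\, d_\mathcal{Z}(z,z')$ for all $z'\in\mathcal{Z}$; (ii) for every $f\in\mathcal{F}$ and every empirical distribution $P_n$ on $\mathcal{Z}$, the set $\{\lambda:\psi_{f,P_n}(\lambda)=0\}$ is nonempty, where $\psi_{f,P_n}(\lambda):=\mathbb{E}_{z\sim P_n}\big(\sup_{z'\in\mathcal{Z}}\{f(z')-\lambda d_\mathcal{Z}(z,z')-f(z)\}\big)$.
   Context: An empirical distribution $P_n$ is the uniform distribution on finitely many points $z_1,\dots,z_n\in\mathcal{Z}$. *)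

(* Defs.v *)
From HB Require Import structures.
From mathcomp Require Import all_boot all_order all_algebra.
From mathcomp Require Import all_classical all_reals ereal.
Set Implicit Arguments. Unset Strict Implicit. Unset Printing Implicit Defensive.
Import Order.TTheory GRing.Theory Num.Theory.
Local Open Scope ring_scope.
Local Open Scope classical_set_scope.

Definition is_metric (R : realType) (Z : Type) (d : Z -> Z -> R) : Prop :=
  [/\ forall x y, 0 <= d x y,
      forall x y, d x y = 0 <-> x = y,
      forall x y, d x y = d y x &
      forall x y z, d x z <= d x y + d y z].

Definition inner_sup (R : realType) (Z : Type) (d : Z -> Z -> R)
    (f : Z -> R) (l : R) (z : Z) : \bar R :=
  ereal_sup (range (fun z' => (f z' - l * d z z' - f z)%:E)).

(* psi_{f,P_n}(l) for the empirical distribution P_n uniform on the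
   points zs 0, ..., zs (n-1) (repetitions allowed, n > 0) *)
Definition psi (R : realType) (Z : Type) (d : Z -> Z -> R)
    (f : Z -> R) (n : nat) (zs : 'I_n -> Z) (l : R) : \bar R :=
  ((n%:R)^-1)%:E * (\sum_(i < n) inner_sup d f l (zs i))%E.

(* Main.v *)
Require Import Defs.
From HB Require Import structures.
From mathcomp Require Import all_boot all_order all_algebra.
From mathcomp Require Import all_classical all_reals ereal.
From mathcomp Require Import lra.
Import Order.TTheory GRing.Theory Num.Theory.
Local Open Scope ring_scope.
Local Open Scope classical_set_scope.

Lemma inner_sup_ge0 (R : realType) (Z : Type) (d : Z -> Z -> R)
  (hd : is_metric d) f l z : (0 <= inner_sup d f l z)%E.
Proof.
case: hd => _ hd0 _ _.
apply: le_trans (@ereal_sup_ubound R _ _ (ex_intro2 _ _ z I erefl)).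
by rewrite lee_fin (proj2 (hd0 z z) erefl) mulr0 subr0 subrr.
Qed.

Lemma inner_sup0 (R : realType) (Z : Type) (d : Z -> Z -> R)
  (hd : is_metric d) f l z :
  (forall z', f z' - f z <= l * d z z') -> inner_sup d f l z = 0%E.
Proof.
move=> H; apply/eqP; rewrite eq_le inner_sup_ge0 // andbT.
apply: ge_ereal_sup => _ [z' _ <-]; rewrite lee_fin.
have := H z'; lra.
Qed.

Theorem lemma3 (R : realType) (Z : Type) (d : Z -> Z -> R)
  (hd : is_metric d) (F : set (Z -> R)) :
  (forall f, F f -> forall z : Z, exists l : R,
      forall z' : Z, f z' - f z <= l * d z z')
  <->
  (forall f, F f -> forall (n : nat) (zs : 'I_n -> Z), (0 < n)%N ->
      exists l : R, psi d f zs l = 0%E).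
Proof.
split.
- move=> H f Ff n zs _.
  have [L HL] := choice (fun i => H f Ff (zs i)).
  exists (\sum_(i < n) `|L i|).
  rewrite /psi big1 ?mule0 // => i _.
  apply: inner_sup0 => // z'.
  apply: le_trans (HL i z') _.
  apply: ler_wpM2r; first by case: hd.
  apply: le_trans (ler_norm _) _.
  rewrite (bigD1 i) //= lerDl.
  by apply: sumr_ge0 => j _.
- move=> H f Ff z.
  have [l Hl] := H f Ff 1%N (fun _ => z) isT.
  exists l => z'.
  move: Hl; rewrite /psi big_ord1 invr1 mul1e => Hl.
  have := @ereal_sup_ubound R (range (fun z' => (f z' - l * d z z' - f z)%:E)) _ (ex_intro2 _ _ z' I erefl).
  rewrite /inner_sup in Hl; rewrite Hl lee_fin => h.
  by rewrite -subr_le0 addrAC.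
Qed.
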